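(* Let $f:\mathbb{R}^d\to\mathbb{R}$ be twice differentiable with $L$-Lipschitz Hessian. Let $x,g\in\mathbb{R}^d$, $H\in\mathbb{R}^{d\times d}$ symmetric, $M\ge L$, let $x^+$ be a global minimizer of $y\mapsto\Omega_{M,g,H}(y,x)$ and $r:=\|x^+-x\|$. Then $$ \frac{\bigl(-\lambda_{\min}(\nabla^2 f(x^+))\bigr)^3}{M^2}\;\le\;14Mr^3+\frac{4}{M^2}\|\nabla^2 f(x)-H\|^3 . $$
   Context: $\|\cdot\|$ is the Euclidean norm on vectors and the spectral norm on symmetric matrices; $\lambda_{\min}$ denotes the smallest eigenvalue. The Hessian of $f$ is $L$-Lipschitz means $\|\nabla^2 f(x)-\nabla^2 f(y)\|\le L\|x-y\|$ for all $x,y$. For $M>0$, $g\in\mathbb{R}^d$ and symmetric $H$, $\Omega_{M,g,H}(y,x):=\langle g,y-x\rangle+\frac12\langle H(y-x),y-x\rangle+\frac{M}{6}\|y-x\|^3$. *)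

(* Defs.v *)
From HB Require Import structures.
From mathcomp Require Import all_boot all_order all_algebra.
From mathcomp Require Import all_classical all_reals all_analysis.
Set Implicit Arguments. Unset Strict Implicit. Unset Printing Implicit Defensive.
Import Order.TTheory GRing.Theory Num.Theory.
Import numFieldNormedType.Exports.
Local Open Scope classical_set_scope.
Local Open Scope ring_scope.

Definition dotv {R : realType} {d : nat} (u v : 'cV[R]_d) : R :=
  \sum_(i < d) u i ord0 * v i ord0.
Definition enorm {R : realType} {d : nat} (v : 'cV[R]_d) : R :=
  Num.sqrt (dotv v v).

Definition specnorm {R : realType} {d : nat} (A : 'M[R]_d) : R :=
  sup [set enorm (A *m v) | v in [set v : 'cV[R]_d | enorm v = 1]].

(* Smallest eigenvalue (the eigenvalues of a real symmetric matrix form a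
   finite nonempty set of reals when d > 0). *)
Definition lambda_min {R : realType} {d : nat} (A : 'M[R]_d) : R :=
  inf [set a : R | eigenvalue A a].

Definition Omega {R : realType} {d : nat} (M : R) (g : 'cV[R]_d) (H : 'M[R]_d)
    (y x : 'cV[R]_d) : R :=
  dotv g (y - x) + 2^-1 * dotv (H *m (y - x)) (y - x)
  + M / 6 * enorm (y - x) ^+ 3.

(* Main.v *)
Require Import Defs.
From HB Require Import structures.
From mathcomp Require Import all_boot all_order all_algebra.
From mathcomp Require Import all_classical all_reals all_analysis.
From mathcomp Require Import ring lra.
Import Order.TTheory GRing.Theory Num.Theory.
Import numFieldNormedType.Exports.
Local Open Scope classical_set_scope.
Local Open Scope ring_scope.
Set Implicit Arguments. Unset Strict Implicit.

Lemma dotvC (R : realType) (d : nat) (u v : 'cV[R]_d) : dotv u v = dotv v u.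
Proof. by rewrite /dotv; apply: eq_bigr => i _; rewrite mulrC. Qed.

Lemma dotvDl (R : realType) (d : nat) (u w v : 'cV[R]_d) :
  dotv (u + w) v = dotv u v + dotv w v.
Proof. by rewrite /dotv -big_split; apply: eq_bigr => i _; rewrite mxE mulrDl. Qed.

Lemma dotvZl (R : realType) (d : nat) (a : R) (u v : 'cV[R]_d) :
  dotv (a *: u) v = a * dotv u v.
Proof. by rewrite /dotv mulr_sumr; apply: eq_bigr => i _; rewrite mxE mulrA. Qed.

Lemma dotvDr (R : realType) (d : nat) (u w v : 'cV[R]_d) :
  dotv v (u + w) = dotv v u + dotv v w.
Proof. by rewrite dotvC dotvDl !(dotvC v). Qed.

Lemma dotvZr (R : realType) (d : nat) (a : R) (u v : 'cV[R]_d) :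
  dotv v (a *: u) = a * dotv v u.
Proof. by rewrite dotvC dotvZl dotvC. Qed.

Lemma dotvNl (R : realType) (d : nat) (u v : 'cV[R]_d) :
  dotv (- u) v = - dotv u v.
Proof. by rewrite -scaleN1r dotvZl mulN1r. Qed.

Lemma dotvNr (R : realType) (d : nat) (u v : 'cV[R]_d) :
  dotv v (- u) = - dotv v u.
Proof. by rewrite dotvC dotvNl dotvC. Qed.

Lemma dotvDml (R : realType) (d : nat) (A B : 'M[R]_d) (u v : 'cV[R]_d) :
  dotv ((A + B) *m u) v = dotv (A *m u) v + dotv (B *m u) v.
Proof. by rewrite mulmxDl dotvDl. Qed.

Lemma dotvNml (R : realType) (d : nat) (A : 'M[R]_d) (u v : 'cV[R]_d) :
  dotv ((- A) *m u) v = - dotv (A *m u) v.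
Proof. by rewrite mulNmx dotvNl. Qed.

Lemma dotv_mulmx (R : realType) (d : nat) (A : 'M[R]_d) (u v : 'cV[R]_d) :
  dotv (A *m u) v = dotv u (A^T *m v).
Proof.
rewrite /dotv.
under eq_bigr => i _ do rewrite mxE mulr_suml.
rewrite exchange_big /=; apply: eq_bigr => j _.
rewrite mxE mulr_sumr; apply: eq_bigr => i _.
rewrite mxE; ring.
Qed.

Lemma dotv_ge0 (R : realType) (d : nat) (v : 'cV[R]_d) : 0 <= dotv v v.
Proof. by apply: sumr_ge0 => i _; rewrite -expr2 sqr_ge0. Qed.

Lemma enorm_ge0 (R : realType) (d : nat) (v : 'cV[R]_d) : 0 <= enorm v.
Proof. exact: sqrtr_ge0. Qed.

Lemma enorm_sq (R : realType) (d : nat) (v : 'cV[R]_d) : enorm v ^+ 2 = dotv v v.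
Proof. by rewrite /enorm sqr_sqrtr // dotv_ge0. Qed.

Lemma CS (R : realType) (d : nat) (u v : 'cV[R]_d) :
  dotv u v ^+ 2 <= dotv u u * dotv v v.
Proof.
have key : forall p q : R, 0 <= p^+2 * dotv u u - 2 * p * q * dotv u v + q^+2 * dotv v v.
  move=> p q; have := dotv_ge0 (p *: u - q *: v).
  rewrite dotvDl !dotvDr !dotvNl !dotvNr !dotvZl !dotvZr (dotvC v u).
  move=> h; apply: (le_trans h); rewrite le_eqVlt; apply/orP; left; apply/eqP; ring.
have ha := dotv_ge0 u; have hc := dotv_ge0 v.
set a := dotv u u in key ha *; set b := dotv u v in key *; set c := dotv v v in key hc *.
have [c0|cpos] := eqVneq c 0.
  have [a0|apos] := eqVneq a 0.
    have h1 := key 1 1; have h2 := key 1 (-1).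
    rewrite c0 a0 in h1 h2 *.
    have -> : b = 0 by nra.
    by rewrite expr0n mul0r.
  have := key b a; rewrite c0 => h.
  have ap : 0 < a by rewrite lt_def apos ha.
  nra.
have := key c b => h.
have cp : 0 < c by rewrite lt_def cpos hc.
nra.
Qed.

Lemma CSn (R : realType) (d : nat) (u v : 'cV[R]_d) :
  `|dotv u v| <= enorm u * enorm v.
Proof.
rewrite /enorm -sqrtrM ?dotv_ge0 // -sqrtr_sqr ler_sqrt; last first.
  by apply: mulr_ge0; apply: dotv_ge0.
exact: CS.
Qed.
Lemma unit_dot (R : realType) (d : nat) (v : 'cV[R]_d) : enorm v = 1 -> dotv v v = 1.
Proof. by move=> h; rewrite -enorm_sq h expr1n. Qed.

Lemma spec_bnd (R : realType) (d : nat) (A : 'M[R]_d) (v : 'cV[R]_d) :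
  enorm v = 1 -> enorm (A *m v) <= Num.sqrt (\sum_(i < d) dotv (row i A)^T (row i A)^T).
Proof.
move=> hv; rewrite /enorm ler_sqrt; last by apply: sumr_ge0 => i _; apply: dotv_ge0.
rewrite /dotv; apply: ler_sum => i _.
have -> : (A *m v) i ord0 = dotv (row i A)^T v.
  by rewrite mxE /dotv; apply: eq_bigr => j _; rewrite !mxE.
rewrite -expr2; have := CS (row i A)^T v; rewrite (unit_dot hv) mulr1.
by rewrite /dotv.
Qed.

Lemma spec_hasub (R : realType) (d : nat) (A : 'M[R]_d) :
  has_ubound [set enorm (A *m v) | v in [set v : 'cV[R]_d | enorm v = 1]].
Proof.
exists (Num.sqrt (\sum_(i < d) dotv (row i A)^T (row i A)^T)).
by move=> _ [v hv <-]; apply: spec_bnd.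
Qed.

Lemma spec_ub (R : realType) (d : nat) (A : 'M[R]_d) (v : 'cV[R]_d) :
  enorm v = 1 -> enorm (A *m v) <= specnorm A.
Proof.
move=> hv; apply: (ub_le_sup (spec_hasub A)); by exists v.
Qed.

Lemma specnorm_ge0 (R : realType) (d : nat) (A : 'M[R]_d) : 0 <= specnorm A.
Proof.
have [[v hv]|nov] := pselect (exists v : 'cV[R]_d, enorm v = 1).
  exact: (le_trans (enorm_ge0 (A *m v)) (spec_ub A hv)).
rewrite /specnorm.
have -> : [set enorm (A *m v) | v in [set v : 'cV[R]_d | enorm v = 1]] = set0.
  by apply/seteqP; split => // x [v hv hx]; apply: nov; exists v.
by rewrite sup0.
Qed.

Lemma quad_spec (R : realType) (d : nat) (A : 'M[R]_d) (v : 'cV[R]_d) :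
  enorm v = 1 -> `|dotv (A *m v) v| <= specnorm A.
Proof.
move=> hv; apply: le_trans (CSn _ _) _; rewrite hv mulr1; exact: spec_ub.
Qed.
Lemma small (R : realType) (a K : R) :
  (forall t : R, 0 < t -> t <= 1 -> a <= t * K) -> a <= 0.
Proof.
move=> h; have [K0|Kp] := lerP K 0.
  by have := h 1 ltr01 (lexx _); rewrite mul1r => h1; apply: le_trans h1 K0.
rewrite leNgt; apply/negP => ap.
have s0 : 0 < a + K by rewrite addr_gt0.
have := h (a / (a + K)).
rewrite divr_gt0 // ler_pdivrMr // mul1r lerDl ltW // => /(_ isT isT).
rewrite mulrAC ler_pdivlMr // => h2.
nra.
Qed.

Lemma cube_id (R : realType) (M r rho : R) :
  M / 6 * (rho ^+ 3 - r ^+ 3) =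
  M * r / 4 * (rho ^+ 2 - r ^+ 2) + M / 12 * ((rho - r) ^+ 2 * (2 * rho + r)).
Proof. by field. Qed.

Lemma scal1 (R : realType) (M r rho t G P Q S om : R) :
  0 <= M -> 0 <= r -> 0 <= rho -> 0 <= om ->
  rho ^+ 2 = r ^+ 2 + 2 * t * S + t ^+ 2 * om ^+ 2 ->
  r ^+ 2 + t * S <= rho * r -> t ^+ 2 <= 1 ->
  0 <= t * G + t * P + t ^+ 2 / 2 * Q + M / 6 * (rho ^+ 3 - r ^+ 3) ->
  0 <= t * (G + P + M * r / 2 * S) +
       t ^+ 2 * ((`|Q| + M * r / 2 * om ^+ 2) / 2 + M / 12 * (om ^+ 2 * (3 * r + 2 * om))).
Proof.
move=> M0 r0 rho0 om0 hrho hcs ht hmin.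
rewrite cube_id hrho in hmin.
have h1 : (rho - r) ^+ 2 <= t ^+ 2 * om ^+ 2 by nra.
have h2 : rho - r <= om.
  have : (rho - r) ^+ 2 <= om ^+ 2 by apply: le_trans h1 _; nra.
  by move=> h; nra.
have h3 : (rho - r) ^+ 2 * (2 * rho + r) <= t ^+ 2 * om ^+ 2 * (3 * r + 2 * om).
  apply: le_trans (_ : (rho - r) ^+ 2 * (3 * r + 2 * om) <= _).
    by apply: ler_wpM2l; [exact: sqr_ge0 | lra].
  by apply: ler_wpM2r; [nra | exact: h1].
have h4 : Q <= `|Q| := ler_norm Q.
have h5 : 0 <= t ^+ 2 := sqr_ge0 t.
have h6 : M / 12 * ((rho - r) ^+ 2 * (2 * rho + r)) <= M / 12 * (t ^+ 2 * om ^+ 2 * (3 * r + 2 * om)).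
  by apply: ler_wpM2l => //; lra.
have h7 : t ^+ 2 / 2 * Q <= t ^+ 2 / 2 * `|Q| by apply: ler_wpM2l => //; lra.
set X := M / 12 * (t ^+ 2 * om ^+ 2 * (3 * r + 2 * om)) in h6.
have -> : t ^+ 2 * ((`|Q| + M * r / 2 * om ^+ 2) / 2 + M / 12 * (om ^+ 2 * (3 * r + 2 * om)))
   = t ^+ 2 / 2 * `|Q| + t ^+ 2 * (M * r / 4 * om ^+ 2) + X by rewrite /X; field.
have : M * r / 4 * (r ^+ 2 + 2 * t * S + t ^+ 2 * om ^+ 2 - r ^+ 2) = t * (M * r / 2 * S) + t ^+ 2 * (M * r / 4 * om ^+ 2) by field.
lra.
Qed.
Lemma scal_core (R : realType) (M r rho t G P Q S om : R) :
  rho ^+ 2 = r ^+ 2 + 2 * t * S + t ^+ 2 * om ^+ 2 ->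
  G + P + M * r / 2 * S = 0 ->
  0 <= t * G + t * P + t ^+ 2 / 2 * Q + M / 6 * (rho ^+ 3 - r ^+ 3) ->
  0 <= t ^+ 2 / 2 * (Q + M * r / 2 * om ^+ 2) + M / 12 * ((rho - r) ^+ 2 * (2 * rho + r)).
Proof.
move=> hrho hl hmin; rewrite cube_id hrho in hmin.
have -> : t ^+ 2 / 2 * (Q + M * r / 2 * om ^+ 2) =
  t * G + t * P + t ^+ 2 / 2 * Q + M * r / 4 * (r ^+ 2 + 2 * t * S + t ^+ 2 * om ^+ 2 - r ^+ 2)
  - t * (G + P + M * r / 2 * S) by field.
by rewrite hl mulr0 subr0; lra.
Qed.

Lemma scal_S0 (R : realType) (M r rho t X om : R) :
  0 <= M -> 0 <= r -> 0 <= rho -> 0 <= om -> 0 < t ->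
  rho ^+ 2 = r ^+ 2 + t ^+ 2 * om ^+ 2 ->
  0 <= t ^+ 2 / 2 * X + M / 12 * ((rho - r) ^+ 2 * (2 * rho + r)) ->
  - X <= t * (M / 3 * om ^+ 3).
Proof.
move=> M0 r0 rho0 om0 t0 hrho h.
have h1 : (rho - r) * (rho + r) = t ^+ 2 * om ^+ 2.
  by rewrite -[t ^+ 2 * om ^+ 2](addKr (r ^+ 2)) -hrho; ring.
have h0 : 0 <= t ^+ 2 * om ^+ 2 by apply: mulr_ge0; apply: sqr_ge0.
have hge : r <= rho.
  rewrite leNgt; apply/negP => hlt.
  have hp : 0 < rho + r by lra. have hn : rho - r < 0 by lra. have : (rho - r) * (rho + r) < 0 by nra. lra.
have h2 : rho - r <= t * om.
  have : (rho - r) ^+ 2 <= (t * om) ^+ 2 by nra.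
  move=> hq; have : 0 <= t * om by nra. nra.
have h3 : (rho - r) ^+ 2 * (2 * rho + r) <= 2 * t ^+ 3 * om ^+ 3.
  have : (rho - r) ^+ 2 * (2 * rho + r) <= 2 * (rho - r) * ((rho - r) * (rho + r)).
    have hh : 0 <= (rho - r) ^+ 2 * r by apply: mulr_ge0 => //; apply: sqr_ge0.
    have -> : 2 * (rho - r) * ((rho - r) * (rho + r)) = (rho - r) ^+ 2 * (2 * rho + r) + (rho - r) ^+ 2 * r by ring.
    lra.
  rewrite h1 => h'; apply: le_trans h' _.
  have : 0 <= t ^+ 2 * om ^+ 2 by nra.
  nra.
have h4 : M / 12 * ((rho - r) ^+ 2 * (2 * rho + r)) <= M / 12 * (2 * t ^+ 3 * om ^+ 3).
  by apply: ler_wpM2l => //; lra.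
have h5 : 0 <= t ^+ 2 / 2 * X + M / 12 * (2 * t ^+ 3 * om ^+ 3) by lra.
have ht2 : 0 < t ^+ 2 / 2 by apply: divr_gt0 => //; apply: exprn_gt0.
have e : t ^+ 2 / 2 * X + M / 12 * (2 * t ^+ 3 * om ^+ 3) = t ^+ 2 / 2 * (X + t * (M / 3 * om ^+ 3)) by field.
rewrite e in h5.
have := pmulr_rge0 _ ht2; move=> /(_ (X + t * (M / 3 * om ^+ 3))).
rewrite h5 => /esym/idP => hh. lra.
Qed.
Definition phi (R : realType) (d : nat) (M : R) (g : 'cV[R]_d) (H : 'M[R]_d) (z : 'cV[R]_d) : R :=
  dotv g z + 2^-1 * dotv (H *m z) z + M / 6 * enorm z ^+ 3.

Lemma tfacts (R : realType) (d : nat) (M : R) (g : 'cV[R]_d) (H : 'M[R]_d) (s w : 'cV[R]_d) (t : R) :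
  H^T = H -> (forall z, phi M g H s <= phi M g H z) ->
  let rho := enorm (s + t *: w) in let r := enorm s in
  [/\ rho ^+ 2 = r ^+ 2 + 2 * t * dotv s w + t ^+ 2 * enorm w ^+ 2,
      r ^+ 2 + t * dotv s w <= rho * r &
      0 <= t * dotv g w + t * dotv (H *m s) w + t ^+ 2 / 2 * dotv (H *m w) w
           + M / 6 * (rho ^+ 3 - r ^+ 3)].
Proof.
move=> HT hmin rho r.
have eHws : dotv (H *m w) s = dotv (H *m s) w by rewrite dotv_mulmx HT dotvC.
have ey : dotv (s + t *: w) (s + t *: w) = dotv s s + 2 * t * dotv s w + t ^+ 2 * dotv w w.
  rewrite dotvDl !dotvDr !dotvZl !dotvZr (dotvC w s); ring.
split.
- by rewrite /rho /r !enorm_sq ey.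
- have := CSn (s + t *: w) s; rewrite dotvDl dotvZl -/rho -/r -enorm_sq => h.
  by rewrite (dotvC w s) in h; exact: le_trans (ler_norm _) h.
- have := hmin (s + t *: w); rewrite /phi -/rho -/r.
  rewrite mulmxDr -scalemxAr !dotvDl !dotvDr !dotvZl !dotvZr eHws.
  move=> h; set A := (X in X <= _) in h; set B := (X in _ <= X) in h.
  have : 0 <= B - A by lra.
  by rewrite /A /B => h'; apply: le_trans h' _; rewrite le_eqVlt; apply/orP; left; apply/eqP; field.
Qed.
Lemma so_cond (R : realType) (d : nat) (M : R) (g : 'cV[R]_d) (H : 'M[R]_d) (s : 'cV[R]_d) :
  H^T = H -> 0 <= M -> (forall z, phi M g H s <= phi M g H z) ->
  forall w, 0 <= dotv (H *m w) w + M * enorm s / 2 * dotv w w.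
Proof.
move=> HT M0 hmin.
have r0 : 0 <= enorm s := enorm_ge0 s.
have step1 : forall w, dotv g w + dotv (H *m s) w + M * enorm s / 2 * dotv s w = 0.
  move=> w.
  set K := (`|dotv (H *m w) w| + M * enorm s / 2 * enorm w ^+ 2) / 2
           + M / 12 * (enorm w ^+ 2 * (3 * enorm s + 2 * enorm w)).
  set l := dotv g w + dotv (H *m s) w + M * enorm s / 2 * dotv s w.
  have ht : forall t, t ^+ 2 <= 1 -> 0 <= t * l + t ^+ 2 * K.
    move=> t ht; have [h1 h2 h3] := tfacts w t HT hmin.
    exact: (scal1 M0 r0 (enorm_ge0 _) (enorm_ge0 w) h1 h2 ht h3).
  have hle : l <= 0.
    apply: (small (K := K)) => u u0 u1.
    have := ht (- u); rewrite sqrrN => /(_ ltac:(nra)) h. nra.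
  have hge : - l <= 0.
    apply: (small (K := K)) => u u0 u1.
    have := ht u => /(_ ltac:(nra)) h. nra.
  lra.
move=> w.
rewrite -enorm_sq.
set r := enorm s; set om := enorm w.
have om0 : 0 <= om := enorm_ge0 w.
set Q := dotv (H *m w) w; set S := dotv s w.
have hl := step1 w.
have core : forall t, 0 <= t ^+ 2 / 2 * (Q + M * r / 2 * om ^+ 2)
      + M / 12 * ((enorm (s + t *: w) - r) ^+ 2 * (2 * enorm (s + t *: w) + r))
      /\ enorm (s + t *: w) ^+ 2 = r ^+ 2 + 2 * t * S + t ^+ 2 * om ^+ 2.
  move=> t; have [h1 h2 h3] := tfacts w t HT hmin.
  split => //; exact: (scal_core h1 hl h3).
have [om_0|om_pos] := eqVneq om 0.
  have : `|Q| <= enorm (H *m w) * om by exact: CSn.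
  rewrite om_0 mulr0 expr0n /= mulr0 addr0 => hQ.
  have := ler_norm (- Q); rewrite normrN; lra.
have omp : 0 < om by rewrite lt_def om_pos om0.
have [S0|Snz] := eqVneq S 0.
  rewrite -oppr_le0; apply: (small (K := M / 3 * om ^+ 3)) => u u0 u1.
  have [c1 c2] := core u.
  rewrite S0 mulr0 addr0 in c2.
  exact: (scal_S0 M0 r0 (enorm_ge0 _) om0 u0 c2 c1).
set t := - 2 * S / om ^+ 2.
have [c1 c2] := core t.
have e : enorm (s + t *: w) ^+ 2 = r ^+ 2.
  by rewrite c2 /t; field.
have e2 : enorm (s + t *: w) = r.
  by apply/eqP; rewrite -(eqrXn2 (n := 2)) // ?e // enorm_ge0.
rewrite e2 subrr expr0n /= mul0r mulr0 addr0 in c1.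
have tp : 0 < t ^+ 2 / 2.
  apply: divr_gt0 => //; rewrite lt_def sqr_ge0 andbT sqrf_eq0 /t.
  rewrite !mulf_eq0 !negb_or invr_eq0 expf_eq0 (negPf om_pos) andbF oppr_eq0 (negPf Snz) /= !andbT pnatr_eq0 //.
by rewrite (pmulr_rge0 _ tp) in c1.
Qed.
Lemma dotv_eq0 (R : realType) (d : nat) (v : 'cV[R]_d) : dotv v v = 0 -> v = 0.
Proof.
move=> /eqP; rewrite /dotv psumr_eq0; last by move=> i _; rewrite -expr2 sqr_ge0.
move=> /allP h; apply/matrixP => i j; rewrite (ord1 j) mxE.
have := h i (mem_index_enum i); rewrite /= mulf_eq0 orbb => /eqP //.
Qed.

Lemma eig_lb (R : realType) (d : nat) (A : 'M[R]_d) (a c : R) :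
  (forall v : 'cV[R]_d, enorm v = 1 -> c <= dotv (A *m v) v) ->
  eigenvalue A a -> c <= a.
Proof.
move=> hq /eigenvalueP [u hu unz].
set v0 := u^T.
have hv0 : dotv (A *m v0) v0 = a * dotv v0 v0.
  by rewrite dotv_mulmx /v0 -trmx_mul hu linearZ /= dotvZr.
have pos : 0 < dotv v0 v0.
  rewrite lt_def dotv_ge0 andbT; apply/eqP => h0.
  move/eqP: unz; apply; by rewrite -[u]trmxK -/v0 (dotv_eq0 h0) trmx0.
have npos : 0 < enorm v0 by rewrite /enorm sqrtr_gt0.
set v := (enorm v0)^-1 *: v0.
have ev : enorm v = 1.
  rewrite /enorm /v dotvZl dotvZr mulrA -expr2 -/(enorm v0) exprVn enorm_sq mulVf ?sqrtr1 //.
  by rewrite gt_eqF.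
have := hq v ev; rewrite /v -scalemxAr dotvZl dotvZr hv0.
have : (enorm v0)^-1 * ((enorm v0)^-1 * (a * dotv v0 v0)) = a.
  rewrite -enorm_sq; field; by rewrite gt_eqF.
by move=> ->.
Qed.
Lemma cube_bound (R : realType) (a e : R) : 0 <= a -> 0 <= e ->
  (a + e) ^+ 3 <= 4 * (a ^+ 3 + e ^+ 3).
Proof.
move=> a0 e0.
have : 0 <= 3 * (a + e) * (a - e) ^+ 2 by apply: mulr_ge0; [lra | apply: sqr_ge0].
have -> : 4 * (a ^+ 3 + e ^+ 3) = (a + e) ^+ 3 + 3 * (a + e) * (a - e) ^+ 2 by ring.
lra.
Qed.

Theorem mainTheorem3 (R : realType) (d : nat) (f : 'cV[R]_d -> R)
    (gradf : 'cV[R]_d -> 'cV[R]_d) (hessf : 'cV[R]_d -> 'M[R]_d) (L M : R)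
    (x g xp : 'cV[R]_d) (H : 'M[R]_d) :
  (forall z, differentiable f z /\ forall h, 'd f z h = dotv (gradf z) h) ->
  (forall z, differentiable gradf z /\ forall h, 'd gradf z h = hessf z *m h) ->
  (forall y z, specnorm (hessf y - hessf z) <= L * enorm (y - z)) ->
  H^T = H ->
  0 < M -> L <= M ->
  (forall y, Omega M g H xp x <= Omega M g H y x) ->
  (- lambda_min (hessf xp)) ^+ 3 / M ^+ 2
    <= 14 * M * enorm (xp - x) ^+ 3
       + 4 / M ^+ 2 * specnorm (hessf x - H) ^+ 3.
Proof.
move=> _ _ hlip HT M0 LM hmin.
set s := xp - x.
have hmin' : forall z, phi M g H s <= phi M g H z.
  move=> z; have := hmin (x + z).
  have e : x + z - x = z by rewrite (addrC x) addrK.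
  by rewrite /Omega e.
have so := so_cond HT (ltW M0) hmin'.
set r := enorm s.
have r0 : 0 <= r := enorm_ge0 s.
set e := specnorm (hessf x - H).
have e0 : 0 <= e := specnorm_ge0 _.
set K := 3 / 2 * M * r + e.
have K0 : 0 <= K by rewrite /K; apply: addr_ge0 => //; apply: mulr_ge0 => //; lra.
have hq : forall v : 'cV[R]_d, enorm v = 1 -> - K <= dotv (hessf xp *m v) v.
  move=> v ev.
  have eA : hessf xp = H + (hessf x - H) + (hessf xp - hessf x).
    by rewrite [H + _]addrC subrK addrC subrK.
  rewrite eA !dotvDml.
  have h1 := so v; rewrite (unit_dot ev) mulr1 in h1.
  have h2 := quad_spec (hessf x - H) ev.
  have h3 := quad_spec (hessf xp - hessf x) ev.
  have h4 := hlip xp x; rewrite -/s -/r in h4.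
  have h5 : L * r <= M * r by apply: ler_wpM2r.
  have := ler_norm (- dotv ((hessf x - H) *m v) v); rewrite normrN -/e.
  have := ler_norm (- dotv ((hessf xp - hessf x) *m v) v); rewrite normrN.
  rewrite -/r in h1; rewrite -/e in h2; rewrite /K !dotvDml !dotvNml in h2 h3 *; lra.
have hl : - lambda_min (hessf xp) <= K.
  rewrite /lambda_min.
  have [[a ha]|noe] := pselect (exists a, eigenvalue (hessf xp) a).
    rewrite lerNl; apply: lb_le_inf; first by exists a.
    by move=> b hb; apply: (eig_lb hq).
  have -> : [set a : R | eigenvalue (hessf xp) a] = set0.
    by apply/seteqP; split => // b hb; apply: noe; exists b.
  by rewrite inf0 oppr0.
set X := - lambda_min (hessf xp) in hl *.
have hX : X ^+ 3 <= K ^+ 3.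
  have [Xn|Xp] := lerP X 0.
    apply: le_trans (_ : 0 <= _); last exact: exprn_ge0.
    by have := sqr_ge0 X; rewrite exprS; nra.
  by rewrite lerXn2r // ?nnegrE ltW.
have hc := cube_bound (a := 3 / 2 * M * r) (e := e) ltac:(nra) e0.
have M2 : 0 < M ^+ 2 by apply: exprn_gt0.
rewrite ler_pdivrMr //.
apply: le_trans hX _; apply: le_trans hc _.
have -> : (14 * M * r ^+ 3 + 4 / M ^+ 2 * e ^+ 3) * M ^+ 2 = 14 * M ^+ 3 * r ^+ 3 + 4 * e ^+ 3.
  by field; rewrite gt_eqF.
have : 0 <= M ^+ 3 * r ^+ 3 by apply: mulr_ge0; apply: exprn_ge0; lra.
have -> : 4 * ((3 / 2 * M * r) ^+ 3 + e ^+ 3) = 27 / 2 * (M ^+ 3 * r ^+ 3) + 4 * e ^+ 3 by field.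
lra.
Qed.
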